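(* Let $s\in\{\tfrac12,1,\tfrac32,\dots\}$, $N\ge1$ and $\lambda\in\mathbb{C}$. The transfer matrix $t^{(2s)}_1(u)$ satisfies, for all $u\in\mathbb{C}$, $${}^t\,t^{(2s)}_1(-u-2\lambda s)=(-1)^{N-1}\,t^{(2s)}_1(u),$$ where ${}^t$ denotes the transpose on $(\mathbb{C}^{2s+1})^{\otimes N}$ with respect to the standard tensor-product basis.
   Context: Define $a_j(u)=\sinh[u+(2s+1-j)\lambda]$ and $b_j(\lambda)=\sqrt{\sinh(j\lambda)\sinh[\lambda(2s+1-j)]}$ (fixed choice of square root). Let $R^{(1,2s)}(u)$ be the matrix on $\mathbb{C}^2\otimes\mathbb{C}^{2s+1}$ (indices $\mu,\nu\in\{1,2\}$, $\alpha,\beta\in\{1,\dots,2s+1\}$) whose only nonzero entries are $R_{1j}^{1j}=a_j(u)$, $R_{2j}^{2j}=a_{2s+2-j}(u)$, $R_{1\,j+1}^{2\,j}=R_{2\,j}^{1\,j+1}=b_j(\lambda)$. With auxiliary space $V_a=\mathbb{C}^2$ and quantum spaces $V_1,\dots,V_N\cong\mathbb{C}^{2s+1}$, let $R_{ak}(u)$ be $R^{(1,2s)}(u)$ acting on $V_a\otimes V_k$, and $F_a=\begin{pmatrix}0&1\\1&0\end{pmatrix}$ acting on $V_a$. Then $t^{(2s)}_1(u)={\rm tr}_a\big(R_{a1}(u)\cdots R_{aN}(u)F_a\big)$, an operator on $V_1\otimes\cdots\otimes V_N$. *)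

(* Defs.v *)
From Stdlib Require Import Reals.
From mathcomp Require Import all_boot all_algebra.
From mathcomp Require Import complex Rstruct.

Unset Printing Implicit Defensive.

Import GRing.Theory.
Local Open Scope ring_scope.

Notation Cx := (complex R).

Definition cexp (z : Cx) : Cx :=
  Complex (Rtrigo_def.exp (Re z) * Rtrigo_def.cos (Im z))
          (Rtrigo_def.exp (Re z) * Rtrigo_def.sin (Im z)).

Definition csinh (z : Cx) : Cx := (cexp z - cexp (- z)) / 2%:R.

(* Throughout, m = 2s (so m >= 1), the quantum space is C^(m+1) with basis
   indexed by alpha : 'I_m.+1, the paper's index being j = alpha + 1;
   the auxiliary space C^2 has basis 'I_2, the paper's index being mu + 1. *)

Definition a_coef (m : nat) (lam : Cx) (j : nat) (u : Cx) : Cx :=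
  csinh (u + (m.+1 - j)%:R * lam).

Definition is_b_choice (m : nat) (lam : Cx) (b : nat -> Cx) : Prop :=
  forall j : nat, (1 <= j <= m)%N ->
    b j ^+ 2 = csinh (j%:R * lam) * csinh (lam * (m.+1 - j)%:R).

(* Entries R^{mu alpha}_{nu beta} of R^{(1,2s)}(u); the row index is the
   upper pair (mu, alpha), the column index the lower pair (nu, beta). *)
Definition Rmat (m : nat) (lam : Cx) (b : nat -> Cx) (u : Cx)
    (x y : 'I_2 * 'I_m.+1) : Cx :=
  let mu := (x.1 : nat).+1 in let j := (x.2 : nat).+1 in
  let nu := (y.1 : nat).+1 in let k := (y.2 : nat).+1 in
  if (mu == nu) && (j == k) then
    (if mu == 1%N then a_coef m lam j u else a_coef m lam (m.+2 - j) u)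
  else if [&& mu == 2%N, nu == 1%N & k == j.+1] then b j
  else if [&& mu == 1%N, nu == 2%N & j == k.+1] then b k
  else 0.

Definition op (T : finType) := T -> T -> Cx.
Definition op_mul (T : finType) (A B : op T) : op T :=
  fun x y => \sum_(z : T) A x z * B z y.
Definition op_id (T : finType) : op T := fun x y => (x == y)%:R.
Definition op_prod (T : finType) (l : seq (op T)) : op T :=
  foldr (@op_mul T) (@op_id T) l.

(* Standard basis of (C^(m+1))^{tensor N}. *)
Definition cfg (m N : nat) := {ffun 'I_N -> 'I_m.+1}.

Definition R_site (m N : nat) (lam : Cx) (b : nat -> Cx) (u : Cx) (k : 'I_N)
  : op ('I_2 * cfg m N)%type :=
  fun x y =>
    Rmat m lam b u (x.1, x.2 k) (y.1, y.2 k)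
    * [forall i : 'I_N, (i != k) ==> (x.2 i == y.2 i)]%:R.

Definition F_aux (m N : nat) : op ('I_2 * cfg m N)%type :=
  fun x y => ((x.1 != y.1) && (x.2 == y.2))%:R.

Definition transfer (m N : nat) (lam : Cx) (b : nat -> Cx) (u : Cx)
  : op (cfg m N) :=
  fun al be =>
    \sum_(mu : 'I_2)
      op_prod _ ([seq R_site m N lam b u k | k <- enum 'I_N] ++ [:: F_aux m N])
              (mu, al) (mu, be).

Definition op_transpose (T : finType) (A : op T) : op T := fun x y => A y x.

(* Main.v *)
Require Import Defs.
From Stdlib Require Import Reals FunctionalExtensionality.
From mathcomp Require Import all_boot all_algebra.
From mathcomp Require Import complex Rstruct ring.
Import GRing.Theory.
Local Open Scope ring_scope.

Lemma csinh_opp z : csinh (- z) = - csinh z.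
Proof. by rewrite /csinh opprK -mulNr opprB. Qed.

Definition sg2 (i : 'I_2) : Cx := (-1) ^+ (i : nat).

Lemma Rmat_sym m lam b u (mu l : 'I_2) (x y : 'I_m.+1) :
  Rmat m lam b (- u - m%:R * lam) (mu, x) (l, y)
  = - sg2 mu * sg2 l * Rmat m lam b u (rev_ord mu, y) (rev_ord l, x).
Proof.
have hx : (x <= m)%N by rewrite -ltnS.
have e1 : (m.+1 - (m.+1 - x) = x)%N by rewrite subKn // leqW.
have ha1 : a_coef m lam x.+1 (- u - m%:R * lam) = - a_coef m lam (m.+2 - x.+1) u.
  rewrite /a_coef !subSS e1 -csinh_opp; congr csinh.
  rewrite natrB //; ring.
have ha2 : a_coef m lam (m.+2 - x.+1) (- u - m%:R * lam) = - a_coef m lam x.+1 u.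
  rewrite /a_coef !subSS e1 -csinh_opp; congr csinh.
  rewrite natrB //; ring.
case: mu => [[|[|mu]] Hmu] //; case: l => [[|[|l]] Hl] //;
  rewrite /Rmat /sg2 /= ?expr0 ?expr1.
- case: eqP => [[<-]|ne]; last by case: eqP => [[e]|]; [move: ne; rewrite e|]; rewrite ?mulr0.
  by rewrite eqxx ha1; ring.
- by ring.
- by ring.
- case: eqP => [[<-]|ne]; last by case: eqP => [[e]|]; [move: ne; rewrite e|]; rewrite ?mulr0.
  by rewrite eqxx ha2; ring.
Qed.

Section W.
Variables (m N : nat) (lam : Cx) (b : nat -> Cx).

Fixpoint W (u : Cx) (ks : seq 'I_N) (mu nu : 'I_2) (al be : cfg m N) : Cx :=
  match ks with
  | [::] => (mu != nu)%:R
  | k :: ks' => \sum_(l : 'I_2) Rmat m lam b u (mu, al k) (l, be k) * W u ks' l nu al be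
  end.

Lemma W_local u ks mu nu (al al' be : cfg m N) :
  (forall i, i \in ks -> al i = al' i) -> W u ks mu nu al be = W u ks mu nu al' be.
Proof.
elim: ks mu => [//|k ks IH] mu H /=.
apply: eq_bigr => l _; rewrite H ?mem_head // IH // => i Hi.
by apply: H; rewrite in_cons Hi orbT.
Qed.

Lemma sum_pair (F : 'I_2 * cfg m N -> Cx) :
  \sum_(z : 'I_2 * cfg m N) F z = \sum_(l : 'I_2) \sum_(g : cfg m N) F (l, g).
Proof. rewrite pair_big; apply: eq_bigr => -[] //. Qed.

Lemma prod_eq u (ks : seq 'I_N) mu nu (al be : cfg m N) : uniq ks ->
  op_prod _ ([seq R_site m N lam b u k | k <- ks] ++ [:: F_aux m N]) (mu, al) (nu, be)
  = [forall i, (i \in ks) || (al i == be i)]%:R * W u ks mu nu al be.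
Proof.
elim: ks mu al => [|k ks IH] mu al /=.
  move=> _; rewrite /op_mul /op_id (bigD1 (nu, be)) //= eqxx mulr1 big1; last first.
    by move=> z /negbTE ->; rewrite mulr0.
  rewrite addr0 /F_aux /=.
  have -> : (al == be) = [forall i, al i == be i].
    apply/eqP/forallP => [-> i //|H]; apply/ffunP => i; exact/eqP.
  by case: (mu != nu); case: [forall i, _]; rewrite /= ?mulr1 ?mulr0.
case/andP=> kks uks.
rewrite /op_mul sum_pair.
pose g0 : cfg m N := [ffun i => if i == k then be k else al i].
have Hg0 : g0 k = be k by rewrite ffunE eqxx.
transitivity (\sum_(l : 'I_2) Rmat m lam b u (mu, al k) (l, be k) *
   ([forall i, (i \in k :: ks) || (al i == be i)]%:R * W u ks l nu al be)).
  apply: eq_bigr => l _; rewrite (bigD1 g0) //= big1 ?addr0; last first.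
    move=> g ng0; rewrite IH // /R_site /=.
    case E1: [forall i, _ ==> _]; last by rewrite mulr0 mul0r.
    case E2: [forall i, _ || _]; last by rewrite mul0r mulr0.
    case/eqP: ng0; apply/ffunP => i; rewrite ffunE.
    move/forallP: E1 => /(_ i); move/forallP: E2 => /(_ i).
    case: (eqVneq i k) => [->|ne]; first by rewrite (negbTE kks) /= => /eqP.
    by move=> _ /implyP /(_ isT) /eqP ->.
  rewrite IH // /R_site /= Hg0.
  have -> : [forall i, (i != k) ==> (al i == g0 i)].
    by apply/forallP => i; rewrite ffunE; case: (eqVneq i k) => [->|_]; rewrite ?eqxx //=.
  have -> : [forall i, (i \in ks) || (g0 i == be i)] =
            [forall i, (i \in k :: ks) || (al i == be i)].
    apply/eq_forallb => i; rewrite ffunE in_cons.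
    by case: (eqVneq i k) => [->|_]; rewrite ?eqxx ?orbT.
  rewrite mulr1; congr (_ * (_ * _)); apply: W_local => i Hi.
  rewrite ffunE; case: (eqVneq i k) => // e; by move: kks; rewrite -e Hi.
by rewrite mulr_sumr; apply: eq_bigr => l _; rewrite mulrCA.
Qed.

Lemma W_sym u ks mu nu (al be : cfg m N) :
  W (- u - m%:R * lam) ks mu nu be al
  = - (-1) ^+ (size ks) * sg2 mu * sg2 nu * W u ks (rev_ord mu) (rev_ord nu) al be.
Proof.
elim: ks mu => [|k ks IH] mu /=.
  case: mu => [[|[|mu]] Hmu] //; case: nu => [[|[|nu]] Hnu] //;
    rewrite /sg2 /= ?expr0 ?expr1; ring.
rewrite mulr_sumr (reindex_inj rev_ord_inj) /=; apply: eq_bigr => l _.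
rewrite Rmat_sym IH rev_ordK exprS.
have : sg2 (rev_ord l) * sg2 (rev_ord l) = 1.
  by case: l => [[|[|l]] Hl] //; rewrite /sg2 /= ?expr0 ?expr1 ?mulr1 ?mulrNN ?mulr1.
move=> h.
set s := sg2 (rev_ord l); set R1 := Rmat _ _ _ _ _ _; set W1 := W _ _ _ _ _ _.
transitivity (- (-1 * (-1) ^+ size ks) * sg2 mu * sg2 nu * (R1 * W1) * (s * s)); [ring | by rewrite h mulr1].
Qed.
End W.

Lemma transfer_W m N lam b u (al be : cfg m N) :
  transfer m N lam b u al be = \sum_(mu : 'I_2) W m N lam b u (enum 'I_N) mu mu al be.
Proof.
rewrite /transfer; apply: eq_bigr => mu _.
rewrite prod_eq ?enum_uniq //.
have -> : [forall i, (i \in enum 'I_N) || (al i == be i)] by apply/forallP => i; rewrite mem_enum.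
by rewrite mul1r.
Qed.

Theorem lemma2 (m : nat) (hm : (1 <= m)%N) (N : nat) (hN : (1 <= N)%N)
    (lam : Cx) (b : nat -> Cx) (hb : is_b_choice m lam b) (u : Cx) :
  op_transpose _ (transfer m N lam b (- u - m%:R * lam))
  = (fun al be => (-1) ^+ (N.-1) * transfer m N lam b u al be).
Proof.
apply: functional_extensionality => al; apply: functional_extensionality => be.
rewrite /op_transpose !transfer_W mulr_sumr (reindex_inj rev_ord_inj) /=.
apply: eq_bigr => mu _; rewrite W_sym rev_ordK size_enum_ord.
have h : sg2 (rev_ord mu) * sg2 (rev_ord mu) = 1.
  by case: mu => [[|[|l]] Hl] //; rewrite /sg2 /= ?expr0 ?expr1 ?mulr1 ?mulrNN ?mulr1.
case: N hN al be => // n _ al be; rewrite /= exprS.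
set W1 := W _ _ _ _ _ _ _ _ _ _; set s := sg2 _.
transitivity ((-1) ^+ n * W1 * (s * s)); [ring | by rewrite h mulr1].
Qed.
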